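(* A permutation $\sigma$ of $\mathcal M$ preserves the relation $z=\pm x\pm y$ if and only if $\sigma\in GL^\pm(\mathcal M)$.
   Context: $\mathcal M$ denotes the $\mathbb Q$-vector space $\mathbb Q^{<\omega}$ of all sequences of rationals with only finitely many nonzero terms, with zero vector $\vec 0$. The relation $z=\pm x\pm y$ is $\{(x,y,z): z\in\{x+y,x-y,-x+y,-x-y\}\}$; $\sigma$ preserves it if $(a,b,c)$ belongs to it iff $(\sigma a,\sigma b,\sigma c)$ does. $GL(\mathcal M)$ is the group of invertible $\mathbb Q$-linear maps of $\mathcal M$; $S^\pm(\mathcal M)$ is the group of permutations $\sigma$ of $\mathcal M$ with $\sigma(x)\in\{x,-x\}$ for every $x\in\mathcal M$; $GL^\pm(\mathcal M)$ is the group generated by $GL(\mathcal M)\cup S^\pm(\mathcal M)$. *)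

(* Defs.v *)
From HB Require Import structures.
From mathcomp Require Import all_boot all_order all_algebra.
Set Implicit Arguments. Unset Strict Implicit. Unset Printing Implicit Defensive.
Import Order.TTheory GRing.Theory Num.Theory.
Local Open Scope ring_scope.

(* M = Q^{<omega}: sequences of rationals with finitely many nonzero terms *)
Definition fin_supp (f : nat -> rat) : Prop :=
  exists N : nat, forall n : nat, (N <= n)%N -> f n = 0.

Definition M : Type := {f : nat -> rat | fin_supp f}.

Lemma fin_supp0 : fin_supp (fun _ => 0).
Proof. by exists 0%N. Qed.

Lemma fin_suppD (f g : nat -> rat) :
  fin_supp f -> fin_supp g -> fin_supp (fun n => f n + g n).
Proof.
move=> [N1 H1] [N2 H2]; exists (maxn N1 N2) => n Hn.
rewrite H1 ?H2 ?addr0 //; apply: leq_trans Hn;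
  by rewrite ?leq_maxl ?leq_maxr.
Qed.

Lemma fin_suppZ (c : rat) (f : nat -> rat) :
  fin_supp f -> fin_supp (fun n => c * f n).
Proof. by move=> [N H]; exists N => n Hn; rewrite H // mulr0. Qed.

Definition mzero : M := exist _ (fun _ => 0) fin_supp0.
Definition madd (x y : M) : M :=
  exist _ (fun n => proj1_sig x n + proj1_sig y n)
        (fin_suppD (proj2_sig x) (proj2_sig y)).
Definition mscale (c : rat) (x : M) : M :=
  exist _ (fun n => c * proj1_sig x n) (fin_suppZ c (proj2_sig x)).
Definition mopp (x : M) : M := mscale (-1) x.

Definition pm_rel (x y z : M) : Prop :=
  z = madd x y \/ z = madd x (mopp y) \/
  z = madd (mopp x) y \/ z = madd (mopp x) (mopp y).

Definition preserves_pm (s : M -> M) : Prop :=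
  forall a b c : M, pm_rel a b c <-> pm_rel (s a) (s b) (s c).

Definition is_perm (s : M -> M) : Prop := bijective s.

Definition in_GL (s : M -> M) : Prop :=
  bijective s /\
  (forall x y : M, s (madd x y) = madd (s x) (s y)) /\
  (forall (c : rat) (x : M), s (mscale c x) = mscale c (s x)).

Definition in_Spm (s : M -> M) : Prop :=
  bijective s /\ forall x : M, s x = x \/ s x = mopp x.

(* GL^pm(M): the group generated by GL(M) u S^pm(M).  Both are subgroups
   (closed under inverses), so the generated group consists of the finite
   composites of their elements. *)
Inductive in_GLpm : (M -> M) -> Prop :=
  | GLpm_id (s : M -> M) : (forall x, s x = x) -> in_GLpm s
  | GLpm_comp (g h s : M -> M) :
      (in_GL g \/ in_Spm g) -> in_GLpm h ->
      (forall x, s x = g (h x)) -> in_GLpm s.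

(* Main.v *)
Require Import Defs.
From HB Require Import structures.
From mathcomp Require Import all_boot all_order all_algebra.
From mathcomp Require Import ring lra.
From Stdlib Require Import FunctionalExtensionality ProofIrrelevance ClassicalEpsilon.
Set Implicit Arguments. Unset Strict Implicit. Unset Printing Implicit Defensive.
Import Order.TTheory GRing.Theory Num.Theory.
Local Open Scope ring_scope.

Lemma meq (x y : M) : (forall n, sval x n = sval y n) -> x = y.
Proof.
case: x => f hf; case: y => g hg /= H.
have E : f = g by apply: functional_extensionality.
subst g; f_equal; apply: proof_irrelevance.
Qed.

Definition sgn (t : rat) := t = 1 \/ t = -1.
Definition sim (X Y : M) := Y = X \/ Y = mopp X.

Lemma sgnM t u : sgn t -> sgn u -> sgn (t * u).
Proof. by case=> ->; case=> ->; rewrite /sgn; [left|right|right|left]; ring. Qed.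
Lemma sgn_cases t u : sgn t -> sgn u -> t = u \/ t = - u.
Proof. by case=> ->; case=> ->; [left|right|right|left]; ring. Qed.
Lemma sgn_sq t : sgn t -> t * t = 1.
Proof. by case=> ->; ring. Qed.

Lemma simP X Y : sim X Y <-> exists t, sgn t /\ forall k, sval Y k = t * sval X k.
Proof.
split.
- case=> ->; [exists 1| exists (-1)]; split; rewrite /sgn; auto => k /=; ring.
- case=> t [[->|->] H]; [left|right]; apply: meq => k; rewrite H /=; ring.
Qed.

Lemma pmP a b c : pm_rel a b c <-> exists t u, sgn t /\ sgn u /\
  forall k, sval c k = t * sval a k + u * sval b k.
Proof.
split.
- case=> [->|[->|[->|->]]].
  + exists 1, 1; do 2 (split; first by left); move=> k /=; ring.
  + exists 1, (-1); split; [by left|split; [by right|move=> k /=; ring]].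
  + exists (-1), 1; split; [by right|split; [by left|move=> k /=; ring]].
  + exists (-1), (-1); do 2 (split; first by right); move=> k /=; ring.
- case=> t [u [[->|->] [[->|->] H]]].
  + left; apply: meq => k; rewrite H /=; ring.
  + right; left; apply: meq => k; rewrite H /=; ring.
  + right; right; left; apply: meq => k; rewrite H /=; ring.
  + right; right; right; apply: meq => k; rewrite H /=; ring.
Qed.

Lemma sim_refl X : sim X X. Proof. by left. Qed.
Lemma sim_sym X Y : sim X Y -> sim Y X.
Proof.
case=> ->; first by left. right; apply: meq => k /=; ring.
Qed.
Lemma sim_trans X Y Z : sim X Y -> sim Y Z -> sim X Z.
Proof.
move=> /simP [t [st H1]] /simP [u [su H2]]; apply/simP; exists (u * t); split.
  exact: sgnM.
by move=> k; rewrite H2 H1 mulrA.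
Qed.
Lemma sim_scale c X Y : sim X Y -> sim (mscale c X) (mscale c Y).
Proof.
move=> /simP [t [st H]]; apply/simP; exists t; split => // k /=; rewrite H; ring.
Qed.
Lemma sim_opp X : sim X (mopp X). Proof. by right. Qed.

Lemma sim_back (X Y : M) t : sgn t -> (forall k, sval Y k = t * sval X k) ->
  forall k, sval X k = t * sval Y k.
Proof. by move=> st H k; rewrite H mulrA sgn_sq // mul1r. Qed.

Lemma pm_rel_sim a b c a' b' c' : sim a a' -> sim b b' -> sim c c' ->
  pm_rel a b c -> pm_rel a' b' c'.
Proof.
move=> /simP [ta [sta Ha]] /simP [tb [stb Hb]] /simP [tc [stc Hc]].
move=> /pmP [t [u [st [su H]]]]; apply/pmP.
exists (tc * t * ta), (tc * u * tb); split; first exact: (sgnM (sgnM stc st) sta).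
split; first exact: (sgnM (sgnM stc su) stb).
move=> k; rewrite Hc H (sim_back sta Ha) (sim_back stb Hb); ring.
Qed.

Lemma pm_sim a b c A B : pm_rel a b c -> sim A a -> sim B b ->
  sim (madd A B) c \/ sim (madd A (mopp B)) c.
Proof.
move=> /pmP [t [u [st [su H]]]] /simP [ta [sta Ha]] /simP [tb [stb Hb]].
have s1 := sgnM st sta; have s2 := sgnM su stb.
case: (sgn_cases s1 s2) => E.
- left; apply/simP; exists (t * ta); split => // k.
  rewrite H Ha Hb /= !mulrA -E; ring.
- right; apply/simP; exists (t * ta); split => // k.
  have E' : u * tb = - (t * ta) by rewrite E opprK.
  rewrite H Ha Hb /= !mulrA E'; ring.
Qed.

Lemma pmE a b c : pm_rel a b c <-> exists t u, sgn t /\ sgn u /\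
  c = madd (mscale t a) (mscale u b).
Proof.
rewrite pmP; split; case=> t [u [st [su H]]]; exists t, u; do 2 split => //.
- by apply: meq => k; rewrite H.
- by move=> k; rewrite H.
Qed.

Lemma pres_GL g : in_GL g -> preserves_pm g.
Proof.
case=> [[gi c1 c2] [hadd hsc]] a b c; rewrite !pmE; split.
- case=> t [u [st [su ->]]]; exists t, u; do 2 split => //.
  by rewrite hadd !hsc.
- case=> t [u [st [su E]]]; exists t, u; do 2 split => //.
  by rewrite -(c1 c) E -!hsc -hadd c1.
Qed.

Lemma pres_Spm g : in_Spm g -> preserves_pm g.
Proof.
case=> _ H a b c; have S x : sim x (g x) by case: (H x); [left|right].
split; first by apply: pm_rel_sim.
by apply: pm_rel_sim; apply: sim_sym.
Qed.

Lemma pres_GLpm s : in_GLpm s -> preserves_pm s.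
Proof.
elim=> [{}s H | g h {}s Hg _ IH E] a b c.
- by rewrite !H.
- have Pg : preserves_pm g by case: Hg; [apply: pres_GL|apply: pres_Spm].
  by rewrite !E IH Pg.
Qed.

Lemma tst2 (n : nat) : (n.+2%:R - n%:R : rat) = 2.
Proof. ring. Qed.

Lemma rat_nat (q : rat) : 0 <= q -> exists k d : nat, (0 < d)%N /\ q = k%:R / d%:R.
Proof.
move=> q0; rewrite -(divq_num_den q).
have := denq_gt0 q; have := q0; rewrite -numq_ge0.
case: (numq q) => [k|k] // _; case: (denq q) => [d|d] // d0.
by exists k, d.
Qed.

Lemma sim0 Y : sim mzero Y -> Y = mzero.
Proof. case=> -> //; apply: meq => k /=; ring. Qed.
Lemma sim0' X : sim X mzero -> X = mzero.
Proof. by move/sim_sym/sim0. Qed.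

Lemma pm0 x z : pm_rel x mzero z <-> sim x z.
Proof.
rewrite pmP; split.
- case=> t [u [st [su H]]]; apply/simP; exists t; split => // k; rewrite H /=; ring.
- move/simP=> [t [st H]]; exists t, 1; do 2 split => //; first by left.
  move=> k; rewrite H /=; ring.
Qed.

Lemma s0 s : preserves_pm s -> s mzero = mzero.
Proof.
move=> hp.
have : pm_rel mzero mzero mzero by left; apply: meq => k /=; ring.
move/hp/pmP=> [t [u [st [su H]]]]; apply: meq => k /=; move: (H k).
by case: st => ->; case: su => ->; lra.
Qed.

Lemma sim_s s x z : preserves_pm s -> sim (s x) (s z) <-> sim x z.
Proof.
move=> hp; rewrite -(pm0 x z) (hp x mzero z) (s0 hp) pm0; exact: iff_refl.
Qed.

Lemma s_zero s x : preserves_pm s -> s x = mzero -> x = mzero.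
Proof.
move=> hp E; apply: sim0; apply/(sim_s _ _ hp); rewrite E (s0 hp); exact: sim_refl.
Qed.

Lemma mscale0 c : mscale c mzero = mzero.
Proof. by apply: meq => k /=; ring. Qed.

Lemma nat_scale s x n : preserves_pm s ->
  sim (mscale n%:R (s x)) (s (mscale n%:R x)).
Proof.
move=> hp.
suff: sim (mscale n%:R (s x)) (s (mscale n%:R x)) /\
      sim (mscale n.+1%:R (s x)) (s (mscale n.+1%:R x)) by case.
elim: n => [|n [IH1 IH2]].
- split.
  + have -> : mscale 0%:R x = mzero by apply: meq => k /=; ring.
    have -> : mscale 0%:R (s x) = mzero by apply: meq => k /=; ring.
    rewrite (s0 hp); exact: sim_refl.
  + have -> : mscale 1%:R x = x by apply: meq => k /=; ring.
    have -> : mscale 1%:R (s x) = s x by apply: meq => k /=; ring.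
    exact: sim_refl.
- split => //.
  have : pm_rel (mscale n.+1%:R x) x (mscale n.+2%:R x).
    by left; apply: meq => k /=; ring.
  move/hp => P; case: (pm_sim P IH2 (sim_refl (s x))) => H.
  + have -> : mscale n.+2%:R (s x) = madd (mscale n.+1%:R (s x)) (s x).
      by apply: meq => k /=; ring.
    exact: H.
  + have E : madd (mscale n.+1%:R (s x)) (mopp (s x)) = mscale n%:R (s x).
      by apply: meq => k /=; ring.
    rewrite E in H.
    have : sim (mscale n%:R x) (mscale n.+2%:R x).
      by apply/(sim_s _ _ hp); apply: sim_trans H; apply: sim_sym.
    move/simP=> [t [st Ht]].
    have x0 : x = mzero.
      apply: meq => k /=; move: (Ht k) => /=.
      case: st => -> Hk.
      * have : (2 : rat) * sval x k = 0 by rewrite -[2](tst2 n); rewrite mulrBl Hk; ring.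
        by move/eqP; rewrite mulf_eq0 => /orP [//|/eqP].
      * have : (n.+2 + n)%:R * sval x k = 0 :> rat by rewrite natrD mulrDl Hk; ring.
        by move/eqP; rewrite mulf_eq0 pnatr_eq0 addSn => /orP [//|/eqP].
    rewrite x0 !mscale0 (s0 hp) !mscale0; exact: sim_refl.
Qed.

Lemma rat_scale_ge0 s x q : preserves_pm s -> 0 <= q ->
  sim (mscale q (s x)) (s (mscale q x)).
Proof.
move=> hp /rat_nat [k [d [d0 ->]]].
have dn : (d%:R : rat) != 0 by rewrite pnatr_eq0 -lt0n.
have H1 := nat_scale (mscale (k%:R / d%:R) x) d hp.
have E : mscale d%:R (mscale (k%:R / d%:R) x) = mscale k%:R x.
  apply: meq => j /=; field; exact: dn.
rewrite E in H1.
have := sim_trans (nat_scale x k hp) (sim_sym H1).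
move/simP=> [t [st Ht]]; apply/simP; exists t; split => // j.
have := Ht j => /= Hj.
have -> : sval (s (mscale (k%:R / d%:R) x)) j
   = (d%:R * sval (s (mscale (k%:R / d%:R) x)) j) / d%:R by field.
rewrite Hj; field; exact: dn.
Qed.

Lemma rat_scale s x q : preserves_pm s -> sim (mscale q (s x)) (s (mscale q x)).
Proof.
move=> hp; case: (lerP 0 q) => q0; first exact: rat_scale_ge0.
have p0 : 0 <= - q by rewrite oppr_ge0 ltW.
have H := rat_scale_ge0 x hp p0.
have A : sim (mscale q (s x)) (mscale (- q) (s x)).
  by right; apply: meq => j /=; ring.
have B : sim (s (mscale (-q) x)) (s (mscale q x)).
  by apply/(sim_s _ _ hp); right; apply: meq => j /=; ring.
exact: sim_trans A (sim_trans H B).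
Qed.

Lemma ev_supp n : fin_supp (fun k => if k == n then (1 : rat) else 0).
Proof. exists n.+1 => k Hk; case: eqP => // E; move: Hk; rewrite E ltnn //=. Qed.
Definition ev n : M := exist _ _ (ev_supp n).

Definition test (s : M -> M) n :=
  sim (madd (s (ev 0)) (s (ev n))) (s (madd (ev 0) (ev n))).
Definition bvec (s : M -> M) n : M :=
  match n with
  | 0 => s (ev 0)
  | _ => if excluded_middle_informative (test s n) then s (ev n) else mopp (s (ev n))
  end.

Fixpoint lin (s : M -> M) (N : nat) (x : M) : M :=
  match N with
  | 0 => mzero
  | N'.+1 => madd (lin s N' x) (mscale (sval x N') (bvec s N'))
  end.

Lemma lin_add s N x y : lin s N (madd x y) = madd (lin s N x) (lin s N y).
Proof.
elim: N => [|N IH] /=; first by apply: meq => j /=; ring.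
rewrite IH; apply: meq => j /=; ring.
Qed.

Lemma lin_scale s N c x : lin s N (mscale c x) = mscale c (lin s N x).
Proof.
elim: N => [|N IH] /=; first by apply: meq => j /=; ring.
rewrite IH; apply: meq => j /=; ring.
Qed.

Lemma lin_stable s K N x : (forall n, (K <= n)%N -> sval x n = 0) -> (K <= N)%N ->
  lin s N x = lin s K x.
Proof.
move=> H; elim: N => [|N IH]; first by rewrite leqn0 => /eqP ->.
rewrite leq_eqVlt => /orP [/eqP -> //| KN].
rewrite /= IH // H //; apply: meq => j /=; ring.
Qed.

Lemma lin_low s N x : (forall k, (k < N)%N -> sval x k = 0) -> lin s N x = mzero.
Proof.
elim: N => [|N IH] H //=.
rewrite IH; last by move=> k Hk; apply: H; apply: ltnW.
rewrite H //; apply: meq => j /=; ring.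
Qed.

Definition Nof (x : M) : nat :=
  proj1_sig (constructive_indefinite_description _ (proj2_sig x)).
Lemma NofP x n : (Nof x <= n)%N -> sval x n = 0.
Proof.
rewrite /Nof; case: constructive_indefinite_description => N HN /=; exact: HN.
Qed.

Definition F (s : M -> M) (x : M) : M := lin s (Nof x) x.

Lemma F_lin s K x : (forall n, (K <= n)%N -> sval x n = 0) -> F s x = lin s K x.
Proof.
move=> H; rewrite /F -(@lin_stable s (Nof x) (maxn K (Nof x))) ?leq_maxr //;
  last by move=> n; apply: NofP.
by rewrite (@lin_stable s K) // leq_maxl.
Qed.

Lemma F_add s x y : F s (madd x y) = madd (F s x) (F s y).
Proof.
pose K := maxn (Nof x) (Nof y).
have Hx n : (K <= n)%N -> sval x n = 0.
  by move=> Hn; apply: NofP; apply: leq_trans Hn; apply: leq_maxl.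
have Hy n : (K <= n)%N -> sval y n = 0.
  by move=> Hn; apply: NofP; apply: leq_trans Hn; apply: leq_maxr.
rewrite (F_lin s Hx) (F_lin s Hy) (@F_lin s K); first exact: lin_add.
by move=> n Hn /=; rewrite Hx // Hy // addr0.
Qed.

Lemma F_scale s c x : F s (mscale c x) = mscale c (F s x).
Proof.
rewrite (@F_lin s (Nof x) (mscale c x)) ?lin_scale // => n Hn /=.
by rewrite NofP // mulr0.
Qed.

Lemma F_ev s n : F s (ev n) = bvec s n.
Proof.
rewrite (@F_lin s n.+1) /=.
  rewrite lin_low; first by rewrite eqxx; apply: meq => j /=; ring.
  by move=> k Hk /=; case: eqP => // E; move: Hk; rewrite E ltnn //=.
by move=> k Hk /=; case: eqP => // E; move: Hk; rewrite E ltnn //=.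
Qed.

Definition good (s : M -> M) x := sim (F s x) (s x).

Lemma good_eq s x y : x = y -> good s x -> good s y.
Proof. by move=> ->. Qed.

Lemma L3 s p e y : preserves_pm s -> good s p -> good s e -> good s y ->
  good s (madd p e) -> good s (madd e y) -> e <> mzero -> ~ sim p y ->
  good s (madd (madd p e) y).
Proof.
move=> hp gp ge gy gpe gey ne nsim.
set x := madd (madd p e) y.
have Fx : F s x = madd (madd (F s p) (F s e)) (F s y) by rewrite /x !F_add.
have P1 : pm_rel (madd p e) y x by left.
have P2 : pm_rel p (madd e y) x by left; apply: meq => k /=; ring.
move/hp: P1 => P1; move/hp: P2 => P2.
have [H1|H1] := pm_sim P1 gpe gy.
  by rewrite /good Fx -F_add.
have [H2|H2] := pm_sim P2 gp gey.
  rewrite /good Fx; suff -> : madd (madd (F s p) (F s e)) (F s y) =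
    madd (F s p) (F s (madd e y)) by [].
  rewrite F_add; apply: meq => k /=; ring.
have := sim_trans H1 (sim_sym H2).
rewrite !F_add => /simP [t [[] -> Ht]].
- exfalso; apply: ne; apply: (s_zero hp); apply: sim0.
  have E : F s e = mzero by apply: meq => k; move: (Ht k) => /=; lra.
  by rewrite -E.
- exfalso; apply: nsim; apply/(sim_s _ _ hp).
  suff E : F s p = F s y by apply: sim_trans (sim_sym gp) _; rewrite E.
  apply: meq => k; move: (Ht k) => /=; lra.
Qed.

Lemma good_scale s q x : preserves_pm s -> good s x -> good s (mscale q x).
Proof.
move=> hp gx; rewrite /good F_scale.
exact: sim_trans (sim_scale q gx) (rat_scale x q hp).
Qed.

Lemma good_ev s n : good s (ev n).
Proof.
rewrite /good F_ev; case: n => [|n] /=; first exact: sim_refl.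
destruct (excluded_middle_informative _); first exact: sim_refl.
exact: sim_sym (sim_opp _).
Qed.

Lemma good_norm s n : preserves_pm s -> good s (madd (ev 0) (ev n.+1)).
Proof.
move=> hp; rewrite /good F_add !F_ev /=.
destruct (excluded_middle_informative _) as [|nt] => //.
have P : pm_rel (ev 0) (ev n.+1) (madd (ev 0) (ev n.+1)) by left.
move/hp: P => P.
by case: (pm_sim P (sim_refl _) (sim_refl _)).
Qed.

Definition supp N (x : M) := forall n, (N <= n)%N -> sval x n = 0.

Lemma nsim_ev N v : supp N v -> ~ sim v (ev N).
Proof.
move=> H [E|E]; move: (f_equal (fun z => sval z N) E) => /=;
  rewrite eqxx H //; lra.
Qed.

Lemma step s N : preserves_pm s -> (0 < N)%N -> (forall v, supp N v -> good s v) ->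
  forall v, supp N v -> forall n : nat, good s (madd v (mscale n%:R (ev N))).
Proof.
move=> hp N0 IH v sv n.
have gN := good_ev s N.
suff : good s (madd v (mscale n%:R (ev N))) /\
       good s (madd v (mscale n.+1%:R (ev N))) by case.
elim: n => [|n [IH1 IH2]].
- split.
  + apply: good_eq (IH v sv); apply: meq => k /=; ring.
  + set p := madd v (mopp (ev 0)).
    have sp : supp N p.
      move=> k Hk /=; rewrite sv //; case: eqP => [E|_]; last by ring.
      by move: N0 Hk; rewrite E => /leq_trans H /H.
    have gpe : good s (madd p (ev 0)).
      by apply: good_eq (IH v sv); apply: meq => k /=; ring.
    have gey : good s (madd (ev 0) (ev N)).
      by case: N N0 {IH sv sp gN} => // N _; apply: good_norm.
    have e0 : ev 0 <> mzero.
      by move=> E; move: (f_equal (fun z => sval z 0) E) => /=; lra.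
    have := L3 hp (IH p sp) (good_ev s 0) gN gpe gey e0 (nsim_ev sp).
    apply: good_eq; apply: meq => k /=; ring.
- split => //.
  have ge : good s (mscale n.+1%:R (ev N)) by apply: good_scale.
  have gey : good s (madd (mscale n.+1%:R (ev N)) (ev N)).
    apply: good_eq (good_scale n.+2%:R hp gN); apply: meq => k /=; ring.
  have e0 : mscale n.+1%:R (ev N) <> mzero.
    move=> E; move: (f_equal (fun z => sval z N) E) => /=; rewrite eqxx mulr1.
    by move/eqP; rewrite pnatr_eq0.
  have := L3 hp (IH v sv) ge gN IH2 gey e0 (nsim_ev sv).
  apply: good_eq; apply: meq => k /=; ring.
Qed.

Lemma good_pos s N : preserves_pm s -> (forall v, supp N.+1 v -> good s v) ->
  forall w, supp N.+1 w -> forall c, 0 <= c -> good s (madd w (mscale c (ev N.+1))).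
Proof.
move=> hp IH w sw c /rat_nat [k [d [d0 ->]]].
have dn : (d%:R : rat) != 0 by rewrite pnatr_eq0 -lt0n.
have sdw : supp N.+1 (mscale d%:R w) by move=> n Hn /=; rewrite sw // mulr0.
have := good_scale (d%:R)^-1 hp (step hp (ltn0Sn N) IH sdw k).
apply: good_eq; apply: meq => j /=; field; exact: dn.
Qed.

Lemma good_supp s N : preserves_pm s -> forall x, supp N.+1 x -> good s x.
Proof.
move=> hp; elim: N => [|N IH] x sx.
- apply: good_eq (good_scale (sval x 0) hp (good_ev s 0)).
  apply: meq => k /=; case: eqP => [->|/eqP nk]; first by ring.
  rewrite (sx k) ?lt0n //; ring.
- set c := sval x N.+1.
  set v := madd x (mscale (- c) (ev N.+1)).
  have sv : supp N.+1 v.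
    move=> n Hn /=; case: eqP => [E|/eqP nE].
      by rewrite /c E; ring.
    rewrite sx; first by ring.
    by rewrite ltn_neqAle eq_sym nE Hn.
  have Ev : madd v (mscale c (ev N.+1)) = x.
    by rewrite /v; apply: meq => k /=; ring.
  clearbody v.
  case: (lerP 0 c) => c0.
    by rewrite -Ev; apply: good_pos.
  have smv : supp N.+1 (mscale (-1) v) by move=> n Hn /=; rewrite (sv n) // mulr0.
  have c0' : 0 <= - c by rewrite oppr_ge0 ltW.
  apply: good_eq (good_scale (-1) hp (good_pos hp IH smv c0')).
  rewrite -Ev; apply: meq => k /=; ring.
Qed.

Lemma good_all s : preserves_pm s -> forall x, good s x.
Proof.
move=> hp x; apply: (good_supp (N := Nof x) hp) => n Hn.
by apply: NofP; apply: ltnW.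
Qed.

Theorem mainTheorem13 (s : M -> M) (hs : is_perm s) :
  preserves_pm s <-> in_GLpm s.
Proof.
split; last exact: pres_GLpm.
move=> hp; have gall := good_all hp.
case: hs => sinv c1 c2.
have Finj x y : F s x = F s y -> x = y.
  move=> E.
  have Z : F s (madd x (mopp y)) = mzero.
    rewrite F_add /mopp F_scale E; apply: meq => k /=; ring.
  have := gall (madd x (mopp y)); rewrite /good Z => /sim0 /(s_zero hp) Z'.
  apply: meq => k; move: (f_equal (fun z => sval z k) Z') => /=; lra.
pose Finv w := let x := sinv w in
  if excluded_middle_informative (F s x = w) then x else mopp x.
have FFinv w : F s (Finv w) = w.
  rewrite /Finv /=; destruct (excluded_middle_informative _) as [E0|ne]; first exact: E0.
  have := gall (sinv w); rewrite /good c2; case=> E; first by case: (ne (esym E)).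
  by rewrite /mopp F_scale [RHS]E; apply: meq => k /=; ring.
have FinvF x : Finv (F s x) = x by apply: Finj; rewrite FFinv.
pose g w := s (Finv w).
have gS : in_Spm g.
  split.
    exists (fun w => F s (sinv w)) => w; rewrite /g.
      by rewrite c1 FFinv.
    by rewrite FinvF c2.
  by move=> w; have := gall (Finv w); rewrite /good FFinv.
have FGL : in_GL (F s).
  split; first by exists Finv.
  by split; [exact: F_add | exact: F_scale].
apply: (@GLpm_comp g (F s) s (or_intror gS)).
  apply: (@GLpm_comp (F s) id (F s) (or_introl FGL)); last by [].
  by apply: GLpm_id.
by move=> x; rewrite /g FinvF.
Qed.
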